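(* If $\pi\in\mathfrak{S}_m$ is a non-overlapping permutation, then $\pi$ and its reversal $\pi^R=\pi_m\pi_{m-1}\cdots\pi_1$ are super-strongly c-Wilf equivalent.
   Context: The standardization $\operatorname{st}(w)$ of a word of distinct integers replaces its smallest entry by 1, the next smallest by 2, etc. For $\pi\in\mathfrak{S}_m$ and $\sigma\in\mathfrak{S}_n$, $\operatorname{Em}(\pi,\sigma)=\{i\in[n-m+1]:\operatorname{st}(\sigma_i\cdots\sigma_{i+m-1})=\pi\}$. For a set $S$ of positive integers, $a^\pi_{n,S}$ is the number of $\sigma\in\mathfrak{S}_n$ with $\operatorname{Em}(\pi,\sigma)=S$; $\pi,\tau$ are super-strongly c-Wilf equivalent if $a^\pi_{n,S}=a^\tau_{n,S}$ for all $n,S$. The overlap set is $\mathcal{O}_\pi=\{i\in[m-1]:\operatorname{st}(\pi_{i+1}\cdots\pi_m)=\operatorname{st}(\pi_1\cdots\pi_{m-i})\}$; $\pi$ is non-overlapping if $\mathcal{O}_\pi=\{m-1\}$. *)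

(* Defs.v *)
From mathcomp Require Import all_boot all_fingroup.
Set Implicit Arguments. Unset Strict Implicit. Unset Printing Implicit Defensive.

(* Permutations of [m] are 'S_m = {perm 'I_m}; entries are 0-based values,
   word positions are 1-based as in the paper. *)

Definition st (w : seq nat) : seq nat :=
  [seq count (fun y => y < x) w | x <- w].

Definition word n (s : 'S_n) : seq nat := [seq val (s i) | i <- enum 'I_n].

Definition Em m n (pi : 'S_m) (sigma : 'S_n) : seq nat :=
  [seq i <- iota 1 (n - m + 1) |
     st (take m (drop i.-1 (word sigma))) == word pi].

Definition seteqb (s t : seq nat) : bool := all (mem t) s && all (mem s) t.

(* a^pi_{n,S}: number of sigma in S_n with Em(pi,sigma) = S (S a finite set of
   positive integers, given by a list) *)
Definition a_cnt m (pi : 'S_m) n (S : seq nat) : nat :=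
  #|[set sigma : 'S_n | seteqb (Em pi sigma) S]|.

Definition super_strongly_cWilf m (pi tau : 'S_m) : Prop :=
  forall n (S : seq nat), all (fun i => 0 < i) S -> a_cnt pi n S = a_cnt tau n S.

Definition overlaps m (pi : 'S_m) : seq nat :=
  [seq i <- iota 1 m.-1 |
     st (drop i (word pi)) == st (take (m - i) (word pi))].

Definition non_overlapping m (pi : 'S_m) : Prop := overlaps pi = [:: m.-1].

Lemma rev_perm_inj m (pi : 'S_m) : injective (fun j : 'I_m => pi (rev_ord j)).
Proof. by move=> i j /= /perm_inj /rev_ord_inj. Qed.

Definition rev_perm m (pi : 'S_m) : 'S_m := perm (@rev_perm_inj m pi).

(* Main.v *)
Require Import Defs.
From mathcomp Require Import all_boot all_fingroup.
From mathcomp Require Import zify.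
Set Implicit Arguments. Unset Strict Implicit. Unset Printing Implicit Defensive.


Lemma size_word n (s : 'S_n) : size (word s) = n.
Proof. by rewrite /word size_map size_enum_ord. Qed.

Lemma nth_word n (s : 'S_n) (i : 'I_n) : nth 0 (word s) i = val (s i).
Proof.
rewrite /word (nth_map i) ?size_enum_ord //; congr (val (s _)).
by apply: val_inj; rewrite /= nth_enum_ord.
Qed.

Lemma word_rev m (p : 'S_m) : word (rev_perm p) = rev (word p).
Proof.
apply: (@eq_from_nth _ 0); first by rewrite size_rev !size_word.
move=> i; rewrite size_word => Hi.
rewrite nth_rev size_word //.
have -> : i = Ordinal Hi by [].
have -> : m - (Ordinal Hi).+1 = rev_ord (Ordinal Hi) by [].
by rewrite !nth_word /rev_perm permE.
Qed.

Lemma st_rev w : st (rev w) = rev (st w).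
Proof. rewrite /st map_rev; congr rev; apply: eq_map => x /=; by rewrite count_rev. Qed.

Lemma size_st w : size (st w) = size w.
Proof. by rewrite /st size_map. Qed.

Lemma st_map_mono (f : nat -> nat) u :
  {in u &, forall x y, (f x < f y) = (x < y)} -> st (map f u) = st u.
Proof.
move=> H; rewrite /st -map_comp; apply/eq_in_map => x xu /=.
rewrite count_map; apply: eq_in_count => y yu /=; exact: H.
Qed.

Lemma count_split w x y : x <= y ->
  count (fun z => z < y) w = count (fun z => z < x) w + count (fun z => (x <= z) && (z < y)) w.
Proof.
move=> xy; elim: w => //= z w ->.
case: (ltnP z x) => zx; case: (ltnP z y) => zy /=; lia.
Qed.

Lemma st_mono w : {in w &, forall x y,
  (count (fun z => z < x) w < count (fun z => z < y) w) = (x < y)}.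
Proof.
have key : forall x y, x \in w -> x < y ->
   count (fun z => z < x) w < count (fun z => z < y) w.
  move=> x y xw xy; rewrite (count_split w (ltnW xy)).
  have : 0 < count (fun z => (x <= z) && (z < y)) w.
    by rewrite -has_count; apply/hasP; exists x => //; rewrite leqnn.
  lia.
move=> x y xw yw; case: (ltngtP x y) => xy.
- by rewrite key.
- by apply/negbTE; rewrite -leqNgt ltnW // key.
- by rewrite xy ltnn.
Qed.

Lemma st_drop e w : st (drop e (st w)) = st (drop e w).
Proof.
rewrite [X in drop e X]/st -map_drop st_map_mono // => x y xu yu.
by apply: st_mono; [exact: mem_drop xu | exact: mem_drop yu].
Qed.

Lemma st_take e w : st (take e (st w)) = st (take e w).
Proof.
rewrite [X in take e X]/st -map_take st_map_mono // => x y xu yu.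
by apply: st_mono; [exact: mem_take xu | exact: mem_take yu].
Qed.

Definition occ m n (p : 'S_m) (s : 'S_n) (j : nat) : bool :=
  st (take m (drop j (word s))) == word p.

Lemma window (s : seq nat) j m : j + m <= size s ->
  take m (drop j s) = map (nth 0 s) (iota j m).
Proof.
move=> H; apply: (@eq_from_nth _ 0).
  by rewrite size_take size_drop size_map size_iota; apply/minn_idPl; lia.
move=> i; rewrite size_take size_drop => Hi.
have Him : i < m by move: Hi; rewrite /minn; case: ifP; lia.
by rewrite nth_take // nth_drop (nth_map 0) ?size_iota // nth_iota.
Qed.

Lemma occ_size m n (p : 'S_m) (s : 'S_n) j : 0 < m -> occ p s j -> j + m <= n.
Proof.
move=> m0 /eqP/(congr1 size); rewrite size_st size_take size_drop !size_word.
case: ltnP; lia.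
Qed.

Lemma occE m n (p : 'S_m) (s : 'S_n) j : 0 < m ->
  occ p s j = (j + m <= n) && (st (map (nth 0 (word s)) (iota j m)) == word p).
Proof.
move=> m0; case H: (j + m <= n).
  by rewrite /occ window // size_word.
by apply/negbTE/negP => /(occ_size m0); rewrite H.
Qed.

Lemma overlaps_rev m (p : 'S_m) : overlaps (rev_perm p) = overlaps p.
Proof.
apply: eq_in_filter => i; rewrite mem_iota => Hi.
rewrite word_rev drop_rev take_rev size_word !st_rev (inj_eq (can_inj revK)).
have -> : m - (m - i) = i by lia.
by rewrite eq_sym.
Qed.

Lemma overlap m n (p : 'S_m) (s : 'S_n) a e :
  occ p s a -> occ p s (a + e) -> 0 < e < m -> e \in overlaps p.
Proof.
move=> + + He; have m0 : 0 < m by lia.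
rewrite !occE // => /andP[Ha /eqP H1] /andP[Hb /eqP H2].
rewrite mem_filter mem_iota.
have -> : 1 <= e < 1 + m.-1 by lia.
rewrite andbT -{1}H1 st_drop -H2 st_take -map_drop -map_take drop_iota take_iota.
have -> : minn (m - e) m = m - e by apply/minn_idPl; lia.
by [].
Qed.

Lemma chain (P : pred nat) d h : 0 < d -> P h ->
  (forall a b, P a -> P b -> a < b -> d <= b - a) ->
  exists lo, [/\ lo <= h, d %| h - lo, (forall j, lo <= j <= h -> d %| j - lo -> P j)
     & (forall a, P a -> a <= h -> if lo <= a then d %| a - lo else a + d < lo)].
Proof.
move=> d0 Ph Hsp.
pose Q s := (s * d <= h) && all (fun t => P (h - t * d)) (iota 0 s.+1).
have Q0 : Q 0 by rewrite /Q /= mul0n subn0 Ph.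
have ub : forall s, Q s -> s <= h by move=> s /andP[H _]; nia.
case: (ex_maxnP (ex_intro _ 0 Q0) ub) => s /andP[Hs Hall] maxs.
have Hall' : forall t, t <= s -> P (h - t * d).
  by move=> t Ht; apply: (allP Hall); rewrite mem_iota; lia.
set lo := h - s * d.
have H3 : forall j, lo <= j <= h -> d %| j - lo -> P j.
  move=> j Hj /dvdnP[t Ht].
  have Hts : t <= s by nia.
  have -> : j = h - (s - t) * d by rewrite mulnBl; nia.
  apply: Hall'; lia.
exists lo; split => //.
- rewrite /lo; lia.
- have -> : h - lo = s * d by rewrite /lo; lia.
  exact: dvdn_mull.
move=> a Pa ah; case: ifP => Hla.
  set q := (a - lo) %/ d.
  have Hdiv := divn_eq (a - lo) d.
  have Hr : (a - lo) %% d < d by rewrite ltn_mod.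
  have Pc : P (lo + q * d).
    apply: H3; first lia.
    by rewrite addKn dvdn_mull.
  case: (posnP ((a - lo) %% d)) => Hr0.
    by apply/dvdnP; exists q; lia.
  have := Hsp _ _ Pc Pa ltac:(lia); lia.
have Plo : P lo by apply: H3; rewrite ?leqnn ?subnn ?dvdn0 //; rewrite /lo; lia.
have Hd := Hsp _ _ Pa Plo ltac:(lia).
case: (ltngtP (lo - a) d) => Hc; [lia | lia |].
have Qs1 : Q s.+1.
  apply/andP; split; first by rewrite mulSn; rewrite /lo in Hc Hla; lia.
  apply/allP => t; rewrite mem_iota => Ht.
  case: (ltnP t s.+1) => Ht'; first by apply: Hall'; lia.
  have -> : t = s.+1 by lia.
  have -> : h - s.+1 * d = a by rewrite mulSn; rewrite /lo in Hc Hla; lia.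
  exact: Pa.
have := maxs _ Qs1; lia.
Qed.

Definition rf lo b x := if (lo <= x) && (x <= b) then lo + b - x else x.

Lemma rfK lo b : involutive (rf lo b).
Proof. move=> x; rewrite /rf; case H: ((lo <= x) && (x <= b)); case: ifP; lia. Qed.

Lemma reflect_perm n lo b : b < n -> exists r : 'S_n, forall i : 'I_n, val (r i) = rf lo b i.
Proof.
move=> bn.
have Hlt : forall i : 'I_n, rf lo b i < n.
  move=> i; have := ltn_ord i; rewrite /rf; case: ifP; lia.
pose f i := Ordinal (Hlt i).
have finj : injective f.
  move=> x y /(congr1 val) /= /(congr1 (rf lo b)); rewrite !rfK => H; exact: val_inj.
by exists (perm finj) => i; rewrite permE.
Qed.

Lemma nth_word_mul n (r s : 'S_n) k (Hk : k < n) :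
  nth 0 (word (r * s)%g) k = nth 0 (word s) (val (r (Ordinal Hk))).
Proof.
by rewrite -[in LHS]/(nat_of_ord (Ordinal Hk)) !nth_word permM.
Qed.

Lemma occ_out m n (p : 'S_m) (r s : 'S_n) lo b j : 0 < m ->
  (forall i : 'I_n, val (r i) = rf lo b i) ->
  (j + m <= lo) || (b < j) -> occ p (r * s)%g j = occ p s j.
Proof.
move=> m0 hr Hj; rewrite !occE //; case H: (j + m <= n) => //=.
congr (st _ == _); apply/eq_in_map => x; rewrite mem_iota => Hx.
have Hxn : x < n by lia.
rewrite (nth_word_mul _ _ Hxn) hr /= /rf; case: ifP => //; lia.
Qed.

Lemma occ_in m n (p : 'S_m) (r s : 'S_n) lo b j : 0 < m ->
  (forall i : 'I_n, val (r i) = rf lo b i) -> b < n ->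
  lo <= j -> j + m <= b.+1 ->
  occ (rev_perm p) (r * s)%g j = occ p s (lo + b.+1 - m - j).
Proof.
move=> m0 hr bn Hlo Hb; rewrite !occE //.
have -> : j + m <= n by lia.
have -> : lo + b.+1 - m - j + m <= n by lia.
rewrite /=.
have -> : map (nth 0 (word (r * s)%g)) (iota j m) =
          rev (map (nth 0 (word s)) (iota (lo + b.+1 - m - j) m)).
  apply: (@eq_from_nth _ 0); first by rewrite size_rev !size_map !size_iota.
  move=> t; rewrite size_map size_iota => Ht.
  have Hjt : j + t < n by lia.
  rewrite nth_rev ?size_map ?size_iota // !(nth_map 0) ?size_iota; try lia.
  rewrite !nth_iota; try lia.
  rewrite (nth_word_mul _ _ Hjt) hr /= /rf.
  have -> : (lo <= j + t) && (j + t <= b) by lia.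
  congr nth; lia.
by rewrite st_rev word_rev (inj_eq (can_inj revK)).
Qed.

Definition spaced m n (A : {set 'I_n}) :=
  forall a b : 'I_n, a \in A -> b \in A -> a < b -> m.-1 <= b - a.

Definition cc m n (p : 'S_m) (A B : {set 'I_n}) :=
  #|[set s : 'S_n | [forall j in A, occ p s j] && [forall j in B, occ (rev_perm p) s j]]|.

Lemma gen m n (p : 'S_m) : 1 < m -> forall k (A B : {set 'I_n}), #|A| <= k ->
  spaced m A -> (forall a b : 'I_n, a \in A -> b \in B -> a + m <= b) ->
  cc p A B = cc p set0 (A :|: B).
Proof.
move=> m1; have m0 : 0 < m by lia.
elim=> [|k IH] A B hk sp hab.
  by move: hk; rewrite leqn0 cards_eq0 => /eqP ->; rewrite set0U.
case: (set_0Vmem A) => [-> | [a0 a0A]]; first by rewrite set0U.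
case: (arg_maxnP (fun i : 'I_n => val i) a0A) => h hA hmax.
have {}hA : h \in A by exact: hA.
have {}hmax : forall a, a \in A -> val a <= val h by move=> a aA; exact: hmax.
case: (leqP (h + m) n) => hn; last first.
  have -> : cc p A B = 0.
    apply/eqP; rewrite cards_eq0; apply/eqP/setP => s; rewrite !inE.
    apply/negbTE/negP => /andP[/forall_inP H _].
    by have := occ_size m0 (H h hA); lia.
  apply/esym/eqP; rewrite cards_eq0; apply/eqP/setP => s; rewrite !inE.
  apply/negbTE/negP => /andP[_ /forall_inP H].
  have hAB : h \in A :|: B by rewrite inE; apply/orP; left; exact: hA.
  by have := occ_size m0 (H h hAB); lia.
pose P x := [exists a in A, val a == x].
have Ph : P h by apply/existsP; exists h; rewrite hA eqxx.
have PA : forall x (Hx : x < n), P x -> Ordinal Hx \in A.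
  move=> x Hx /existsP[a /andP[aA /eqP ax]].
  by have -> : Ordinal Hx = a by apply: val_inj.
have [lo [Hlo Hdh H3 H4]] : exists lo, [/\ lo <= h, m.-1 %| h - lo,
     (forall j, lo <= j <= h -> m.-1 %| j - lo -> P j)
     & (forall a, P a -> a <= h -> if lo <= a then m.-1 %| a - lo else a + m.-1 < lo)].
  apply: chain => //; first lia.
  move=> a b /existsP[a' /andP[a'A /eqP <-]] /existsP[b' /andP[b'A /eqP <-]].
  exact: sp.
pose K := [set j : 'I_n | (lo <= j <= h) && (m.-1 %| j - lo)].
have KA : forall j, j \in K -> j \in A.
  move=> j; rewrite inE => /andP[Hj Hd].
  by have := PA j (ltn_ord j) (H3 j Hj Hd); rewrite (_ : Ordinal _ = j) //; apply: val_inj.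
pose A' := A :\: K.
have hA' : forall a, a \in A' -> a + m <= lo.
  move=> a; rewrite !inE => /andP[aK aA].
  have Pa : P a by apply/existsP; exists a; rewrite aA eqxx.
  have := H4 a Pa (hmax a aA); case: ifP => Hla Hd.
    by move: aK; rewrite Hla (hmax a aA) Hd.
  lia.
have hK : h \in K by rewrite inE Hlo leqnn Hdh.
have cardA' : #|A'| <= k.
  rewrite -ltnS; apply: leq_trans hk; apply: proper_card; apply/properP; split.
    exact: subsetDl.
  by exists h => //; rewrite inE hK.
have -> : A :|: B = A' :|: (K :|: B).
  apply/setP => x; rewrite !in_setU in_setD; case xK: (x \in K) => /=; last by [].
  by rewrite (KA x).
rewrite -IH //; first last.
- move=> a b aA'; rewrite inE => /orP[bK | bB].
    by move: bK; rewrite inE => /andP[/andP[Hb _] _]; have := hA' a aA'; lia.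
  by apply: hab => //; move: aA'; rewrite inE => /andP[].
- by move=> a b; rewrite !inE => /andP[_ aA] /andP[_ bA]; exact: sp.
have bn : h + m.-1 < n by lia.
have [r hr] := reflect_perm lo bn.
rewrite /cc -[RHS](card_preimset _ (mulgI r)); apply: eq_card => s; rewrite !inE.
have F1 : forall j, j \in A' -> occ p (r * s)%g j = occ p s j.
  by move=> j jA; apply: (occ_out _ _ m0 hr); rewrite (hA' j jA).
have F2 : forall j, j \in B -> occ (rev_perm p) (r * s)%g j = occ (rev_perm p) s j.
  move=> j jB; apply: (occ_out _ _ m0 hr); have := hab h j hA jB; lia.
have F3 : forall j, j \in K -> occ (rev_perm p) (r * s)%g j = occ p s (lo + h - j).
  move=> j; rewrite inE => /andP[/andP[Hj1 Hj2] _].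
  rewrite (occ_in _ _ m0 hr bn) //; last lia.
  congr occ; lia.
have Ksym : forall j, j \in K -> exists2 j', j' \in K & val j' = lo + h - j.
  move=> j; rewrite inE => /andP[/andP[Hj1 Hj2] Hd].
  have Hlt : lo + h - j < n by have := ltn_ord h; lia.
  exists (Ordinal Hlt) => //; rewrite inE /=.
  have -> : lo + h - j - lo = (h - lo) - (j - lo) by lia.
  rewrite dvdn_sub //; lia.
apply/idP/idP.
  move=> /andP[/forall_inP Ha /forall_inP Hb]; apply/andP; split.
    apply/forall_inP => j jA'; rewrite F1 //; apply: Ha.
    by move: jA'; rewrite inE => /andP[].
  apply/forall_inP => j; rewrite inE => /orP[jK | jB].
    rewrite F3 //; have [j' j'K <-] := Ksym j jK; exact: Ha (KA _ j'K).
  by rewrite F2 // Hb.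
move=> /andP[/forall_inP H1 /forall_inP H2]; apply/andP; split.
  apply/forall_inP => j jA; case jK: (j \in K).
    have [j' j'K Hj'] := Ksym j jK.
    have j'KB : j' \in K :|: B by rewrite inE j'K.
    have := H2 j' j'KB; rewrite F3 // Hj'.
    have -> : lo + h - (lo + h - j) = j; last by [].
    by move: jK; rewrite inE => /andP[/andP[? ?] _]; lia.
  by rewrite -F1 ?H1 // inE jK jA.
apply/forall_inP => j jB; rewrite -F2 // H2 // inE jB orbT //.
Qed.

Definition En m n (p : 'S_m) (s : 'S_n) : {set 'I_n} := [set j : 'I_n | occ p s j].
Definition ac m n (p : 'S_m) (A : {set 'I_n}) := #|[set s : 'S_n | En p s == A]|.
Definition bc m n (p : 'S_m) (A : {set 'I_n}) := #|[set s : 'S_n | A \subset En p s]|.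

Lemma bsum m n (p : 'S_m) (A : {set 'I_n}) :
  bc p A = \sum_(B : {set 'I_n} | A \subset B) ac p B.
Proof.
rewrite /bc -sum1_card (partition_big (fun s => En p s) (fun B => A \subset B)) /=; last first.
  by move=> s; rewrite inE.
apply: eq_bigr => B AB; rewrite /ac -sum1_card; apply: eq_bigl => s.
rewrite !inE; case E: (En p s == B); rewrite ?andbF ?andbT //.
by rewrite (eqP E).
Qed.

Lemma forall_set0 (T : finType) (P : pred T) : [forall j in (set0 : {set T}), P j].
Proof. by apply/forall_inP => j; rewrite inE. Qed.

Lemma b_eq m n (p : 'S_m) (A : {set 'I_n}) : 1 < m -> non_overlapping p ->
  bc p A = bc (rev_perm p) A.
Proof.
move=> m1 Hno; have m0 : 0 < m by lia.
have [sp | nsp] := boolP [forall a in A, [forall b in A, (a < b) ==> (m.-1 <= b - a)]].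
  have spA : spaced m A.
    move=> a b aA bA ab; move/forall_inP: sp => /(_ a aA) /forall_inP /(_ b bA).
    by rewrite ab.
  have -> : bc p A = cc p A set0.
    apply: eq_card => s; rewrite !inE.
    rewrite forall_set0.
    by rewrite andbT; apply/subsetP/forall_inP => H j jA; [move: (H j jA); rewrite inE | rewrite inE H].
  have -> : bc (rev_perm p) A = cc p set0 A.
    apply: eq_card => s; rewrite !inE.
    rewrite forall_set0.
    by apply/subsetP/forall_inP => H j jA; [move: (H j jA); rewrite inE | rewrite inE H].
  by rewrite (@gen _ _ p m1 #|A| A set0 (leqnn _) spA) ?setU0 // => a b; rewrite inE.
move/forall_inPn: nsp => [a aA /forall_inPn [b bA]]; rewrite negb_imply => /andP[ab Hba].
have zero : forall q : 'S_m, overlaps q = [:: m.-1] -> bc q A = 0.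
  move=> q Hq; apply/eqP; rewrite cards_eq0; apply/eqP/setP => s; rewrite !inE.
  apply/negbTE/negP => /subsetP H.
  have Ha : occ q s a by move: (H a aA); rewrite inE.
  have Hb : occ q s (a + (b - a)) by rewrite subnKC ?(ltnW ab) //; move: (H b bA); rewrite inE.
  have := overlap Ha Hb ltac:(lia); rewrite Hq inE => /eqP; lia.
rewrite !zero //; by rewrite overlaps_rev.
Qed.

Lemma ac_step m n (p : 'S_m) (A : {set 'I_n}) : 1 < m -> non_overlapping p ->
  (forall B : {set 'I_n}, A \proper B -> ac p B = ac (rev_perm p) B) -> ac p A = ac (rev_perm p) A.
Proof.
move=> m1 Hno IH.
have E : forall q : 'S_m, bc q A = ac q A + \sum_(B : {set 'I_n} | (A \subset B) && (B != A)) ac q B.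
  by move=> q; rewrite bsum (bigD1 A) //=.
have := E p; rewrite b_eq // E.
rewrite [X in _ = _ + X](eq_bigr (fun B => ac (rev_perm p) B)); last first.
  by move=> B /andP[AB BA]; apply: IH; rewrite properEneq eq_sym BA.
by move/addIn ->.
Qed.

Lemma ac_eq m n (p : 'S_m) (A : {set 'I_n}) : 1 < m -> non_overlapping p ->
  ac p A = ac (rev_perm p) A.
Proof.
move=> m1 Hno.
suff : forall k (A : {set 'I_n}), #|~: A| <= k -> ac p A = ac (rev_perm p) A by apply.
elim=> [|k IH] {}A hk; apply: ac_step => // B AB.
  have H : ~: B \proper ~: A by rewrite properC.
  by have := proper_card H; rewrite (leqn0 _) in hk; move/eqP: hk => ->.
have H : ~: B \proper ~: A by rewrite properC.
by apply: IH; rewrite -ltnS; apply: leq_trans hk; exact: proper_card H.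
Qed.

Lemma memEm m n (p : 'S_m) (s : 'S_n) x : 0 < m ->
  (x \in Em p s) = (0 < x) && occ p s x.-1.
Proof.
move=> m0; rewrite /Em mem_filter mem_iota -/(occ p s x.-1).
case H: (occ p s x.-1); rewrite ?andbF //= andbT.
have := occ_size m0 H; lia.
Qed.

Theorem corollary5p5 (m : nat) (pi : 'S_m) :
  non_overlapping pi -> super_strongly_cWilf pi (rev_perm pi).
Proof.
move=> Hno n S /allP Spos.
have m1 : 1 < m.
  have : m.-1 \in overlaps pi by rewrite Hno inE.
  rewrite mem_filter mem_iota => /andP[_]; lia.
have m0 : 0 < m by lia.
case: (boolP (all (fun x => x <= n) S)) => [/allP Sn | nSn].
  pose SA := [set j : 'I_n | j.+1 \in S].
  have claim : forall q : 'S_m, forall s : 'S_n, seteqb (Em q s) S = (En q s == SA).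
    move=> q s; apply/idP/idP.
      move=> /andP[/allP H1 /allP H2]; apply/eqP/setP => j; rewrite !inE.
      apply/idP/idP => Hj.
        by apply: (H1 j.+1); rewrite memEm.
      have H : j.+1 \in Em q s := H2 _ Hj.
      by rewrite memEm in H.
    move/eqP/setP => E; apply/andP; split; apply/allP => x.
      rewrite memEm // => /andP[x0 Hx].
      have Hxn : x.-1 < n by have := occ_size m0 Hx; lia.
      by have := E (Ordinal Hxn); rewrite !inE /= Hx prednK.
    move=> xS; have x0 := Spos x xS; have xn := Sn x xS.
    have Hxn : x.-1 < n by lia.
    have := E (Ordinal Hxn); rewrite !inE /= prednK // xS => Ho.
    have H : x \in Em q s by rewrite memEm // x0 Ho.
    exact: H.
  rewrite /a_cnt.
  have Hc : forall q : 'S_m, #|[set sigma : 'S_n | seteqb (Em q sigma) S]| = ac q SA.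
    by move=> q; apply: eq_card => s; rewrite !inE claim.
  by rewrite !Hc; apply: ac_eq.
have [x xS xn] : exists2 x, x \in S & n < x.
  by move/allPn: nSn => [x xS]; rewrite -ltnNge => xn; exists x.
have zero : forall q : 'S_m, a_cnt q n S = 0.
  move=> q; apply/eqP; rewrite cards_eq0; apply/eqP/setP => s; rewrite !inE.
  apply/negbTE/negP => /andP[_ /allP /(_ x xS)] H.
  have H' : x \in Em q s := H.
  by move: H'; rewrite memEm // => /andP[x0 /(occ_size m0)]; lia.
by rewrite !zero.
Qed.
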